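(* Let $\mathcal M$ be a complete, connected Riemannian manifold, let $A=(a_{ij})\in\mathbb R^{N\times K}$ have unit row sums, let $f\in\mathcal M^N$, $p\in[1,\infty)$, $\lambda>0$, and let $R:\mathcal M^K\to[0,\infty)$ be a regularizing term. Assume that $R$ is lower semicontinuous and that for every sequence $(u^{(n)})_n$ in $\mathcal M^K$ with $\operatorname{diam}(u^{(n)})\to\infty$ one has $R(u^{(n)})\to\infty$. Then the variational problem $$\min_{u\in\mathcal M^K}\ \mathrm{dist}(\mathcal A(u),f)^p+\lambda R(u)$$ has a minimizer.
   Context: $\mathrm{dist}$ denotes the Riemannian distance on $\mathcal M$. The entries $a_{ij}$ of $A$ may be negative; only $\sum_j a_{ij}=1$ for each $i$ is assumed. For $u=(u_1,\dots,u_K)\in\mathcal M^K$ and $i\in\{1,\dots,N\}$, let $\mathrm{mean}(a_{i,\cdot},u)=\operatorname{argmin}_{v\in\mathcal M}\sum_{j=1}^K a_{ij}\,\mathrm{dist}(v,u_j)^2$ (the set of all minimizers), and let $\mathcal A(u)_i$ be the set of those elements of $\mathrm{mean}(a_{i,\cdot},u)$ that minimize $v\mapsto \mathrm{dist}(v,f_i)$ over $\mathrm{mean}(a_{i,\cdot},u)$ (the weighted Riemannian means closest to $f_i$). All elements of $\mathcal A(u)_i$ have the same distance to $f_i$, denoted $\mathrm{dist}(\mathcal A(u)_i,f_i)$, and the data term is $\mathrm{dist}(\mathcal A(u),f)^p=\sum_{i=1}^N \mathrm{dist}(\mathcal A(u)_i,f_i)^p$. For $u\in\mathcal M^K$, $\operatorname{diam}(u)=\max_{j,k}\mathrm{dist}(u_j,u_k)$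 is the diameter of the set of entries of $u$. *)

(* Defs.v *)
From Stdlib Require Import Reals Lra.
Open Scope R_scope.

Fixpoint sumR (n : nat) (g : nat -> R) : R :=
  match n with O => 0 | S m => sumR m g + g m end.

Fixpoint maxR (n : nat) (g : nat -> R) : R :=
  match n with O => 0 | S m => Rmax (maxR m g) (g m) end.

(* x^p for x >= 0, p >= 1, with the convention 0^p = 0. *)
Definition rpow (x p : R) : R :=
  match Req_EM_T x 0 with left _ => 0 | right _ => Rpower x p end.

(* Metric-space abstraction of the Riemannian distance of a complete,
   connected Riemannian manifold:
   - dist is a (finite-valued) metric  (connectedness => finite distance);
   - Hopf-Rinow: closed bounded sets are compact, stated sequentially;
   - Hopf-Rinow: any two points are joined by a minimizing geodesic,
     in particular midpoints exist. *)
Definition complete_connected_riemannian_distance {M : Type} (dist : M -> M -> R) : Prop :=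
  (forall x y, 0 <= dist x y) /\
  (forall x y, dist x y = 0 <-> x = y) /\
  (forall x y, dist x y = dist y x) /\
  (forall x y z, dist x z <= dist x y + dist y z) /\
  (forall (x : nat -> M) (o : M) (c : R), (forall n, dist (x n) o <= c) ->
     exists (phi : nat -> nat) (y : M),
       (forall n, (phi n < phi (S n))%nat) /\
       Un_cv (fun n => dist (x (phi n)) y) 0) /\
  (forall x y, exists z, dist x z = dist x y / 2 /\ dist z y = dist x y / 2).

(* Points of M^K are represented as u : nat -> M; only u 0, ..., u (K-1) matter. *)

Definition diam {M : Type} (dist : M -> M -> R) (K : nat) (u : nat -> M) : R :=
  maxR K (fun j => maxR K (fun k => dist (u j) (u k))).

Definition is_mean {M : Type} (dist : M -> M -> R) (K : nat)
    (A : nat -> nat -> R) (i : nat) (u : nat -> M) (v : M) : Prop :=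
  forall w : M,
    sumR K (fun j => A i j * (dist v (u j)) ^ 2) <=
    sumR K (fun j => A i j * (dist w (u j)) ^ 2).

Definition in_calA {M : Type} (dist : M -> M -> R) (K : nat)
    (A : nat -> nat -> R) (f : nat -> M) (u : nat -> M) (i : nat) (v : M) : Prop :=
  is_mean dist K A i u v /\
  forall w, is_mean dist K A i u w -> dist v (f i) <= dist w (f i).

(* objective_value u E : E = dist(A(u),f)^p + lambda R(u)
   (the value is independent of the chosen v_i \in A(u)_i). *)
Definition objective_value {M : Type} (dist : M -> M -> R) (N K : nat)
    (A : nat -> nat -> R) (f : nat -> M) (p lam : R) (Reg : (nat -> M) -> R)
    (u : nat -> M) (E : R) : Prop :=
  exists v : nat -> M,
    (forall i, (i < N)%nat -> in_calA dist K A f u i (v i)) /\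
    E = sumR N (fun i => rpow (dist (v i) (f i)) p) + lam * Reg u.

Definition lsc_on_MK {M : Type} (dist : M -> M -> R) (K : nat)
    (Reg : (nat -> M) -> R) : Prop :=
  forall (u : nat -> M) (eps : R), 0 < eps ->
    exists delta, 0 < delta /\
      forall v : nat -> M, (forall j, (j < K)%nat -> dist (v j) (u j) < delta) ->
        Reg u - eps < Reg v.

Definition coercive_in_diam {M : Type} (dist : M -> M -> R) (K : nat)
    (Reg : (nat -> M) -> R) : Prop :=
  forall useq : nat -> (nat -> M),
    cv_infty (fun n => diam dist K (useq n)) ->
    cv_infty (fun n => Reg (useq n)).

(* Main.v *)
Require Import Defs.
From Stdlib Require Import Reals Lra Lia Psatz ClassicalEpsilon.
Open Scope R_scope.

Lemma rpow_nonneg x p : 0 <= rpow x p.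
Proof. unfold rpow; destruct (Req_EM_T x 0); [lra|]. unfold Rpower; left; apply exp_pos. Qed.

Lemma rpow_0 p : rpow 0 p = 0.
Proof. unfold rpow; destruct (Req_EM_T 0 0); [lra|congruence]. Qed.

Lemma rpow_pos x p : 0 < x -> rpow x p = Rpower x p.
Proof. intros; unfold rpow; destruct (Req_EM_T x 0); [lra|auto]. Qed.

Lemma rpow_mono x y p : 0 <= p -> 0 <= x <= y -> rpow x p <= rpow y p.
Proof.
  intros Hp Hxy. destruct (Req_EM_T x 0) as [->|Hx].
  - rewrite rpow_0; apply rpow_nonneg.
  - rewrite !rpow_pos by lra. apply Rle_Rpower_l; lra.
Qed.

Lemma rpow_bound x p c : 1 <= p -> 0 <= x -> rpow x p <= c -> x <= Rmax 1 c.
Proof.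
  intros Hp Hx H. destruct (Rle_dec x 1). { pose proof (Rmax_l 1 c); lra. }
  rewrite rpow_pos in H by lra.
  assert (Rpower x 1 <= Rpower x p) by (apply Rle_Rpower; lra).
  rewrite Rpower_1 in H0 by lra. pose proof (Rmax_r 1 c); lra.
Qed.

Lemma rpow_small x p : 1 <= p -> 0 < x < 1 -> Rpower x p <= x.
Proof.
  intros Hp Hx. unfold Rpower.
  assert (ln x < 0) by (rewrite <- ln_1; apply ln_increasing; lra).
  assert (p * ln x <= ln x) by nra.
  destruct H0. - left. rewrite <- (exp_ln x) at 2 by lra. apply exp_increasing; lra.
  - rewrite H0, exp_ln; lra.
Qed.

Lemma rpow_cont (x : nat -> R) a p : 1 <= p -> (forall n, 0 <= x n) -> 0 <= a ->
  Un_cv x a -> Un_cv (fun n => rpow (x n) p) (rpow a p).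
Proof.
  intros Hp Hx Ha Hc. destruct (Req_EM_T a 0) as [->|Ha0].
  - rewrite rpow_0. intros eps He. destruct (Hc (Rmin eps 1)) as [N HN].
    { apply Rmin_glb_lt; lra. }
    exists N; intros n Hn. specialize (HN n Hn). unfold Rdist in *.
    rewrite Rminus_0_r in *. pose proof (Rmin_l eps 1). pose proof (Rmin_r eps 1).
    pose proof (Hx n). rewrite Rabs_pos_eq in HN by lra.
    rewrite Rabs_pos_eq by apply rpow_nonneg.
    destruct (Req_EM_T (x n) 0) as [->|Hn0]. { rewrite rpow_0; lra. }
    rewrite rpow_pos by lra. pose proof (rpow_small (x n) p Hp). lra.
  - assert (Hc2 : Un_cv (fun n => Rpower (x n) p) (Rpower a p)).
    { apply (continuity_seq (fun y => Rpower y p)); auto. apply derivable_continuous_pt.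
      exists (p * Rpower a (p - 1)). apply derivable_pt_lim_power; lra. }
    rewrite rpow_pos by lra.
    intros eps He. destruct (Hc2 eps He) as [N1 H1]. destruct (Hc a) as [N2 H2]; [lra|].
    exists (max N1 N2). intros n Hn. rewrite rpow_pos.
    + apply H1; lia.
    + specialize (H2 n ltac:(lia)). unfold Rdist in H2.
      destruct (Rabs_def2 _ _ H2); lra.
Qed.


Lemma sumR_ext n g h : (forall i, (i < n)%nat -> g i = h i) -> sumR n g = sumR n h.
Proof. induction n; simpl; intros H; auto. rewrite IHn, H; auto; intros; apply H; lia. Qed.

Lemma sumR_le n g h : (forall i, (i < n)%nat -> g i <= h i) -> sumR n g <= sumR n h.
Proof. induction n; simpl; intros H; [lra|]. pose proof (H n ltac:(lia)).
  assert (sumR n g <= sumR n h) by (apply IHn; intros; apply H; lia). lra. Qed.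

Lemma sumR_nonneg n g : (forall i, (i < n)%nat -> 0 <= g i) -> 0 <= sumR n g.
Proof. intros H. replace 0 with (sumR n (fun _ => 0)).
  - apply sumR_le; auto.
  - induction n; simpl; auto. rewrite IHn; [lra|]. intros; apply H; lia. Qed.

Lemma sumR_term_le n g i : (forall k, (k < n)%nat -> 0 <= g k) -> (i < n)%nat -> g i <= sumR n g.
Proof. induction n; simpl; intros H Hi; [lia|].
  assert (0 <= sumR n g) by (apply sumR_nonneg; intros; apply H; lia).
  destruct (Nat.eq_dec i n) as [->|]. lra.
  assert (g i <= sumR n g) by (apply IHn; [intros; apply H; lia| lia]).
  pose proof (H n ltac:(lia)). lra. Qed.

Lemma sumR_scal n g c : sumR n (fun i => c * g i) = c * sumR n g.
Proof. induction n; simpl; [ring|]. rewrite IHn; ring. Qed.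

Lemma sumR_plus n g h : sumR n (fun i => g i + h i) = sumR n g + sumR n h.
Proof. induction n; simpl; [ring|]. rewrite IHn; ring. Qed.

Lemma maxR_ge n g i : (i < n)%nat -> g i <= maxR n g.
Proof. induction n; simpl; intros Hi; [lia|].
  destruct (Nat.eq_dec i n) as [->|]. apply Rmax_r.
  eapply Rle_trans; [apply IHn; lia| apply Rmax_l]. Qed.

Lemma Un_cv_ext (u v : nat -> R) l : (forall n, u n = v n) -> Un_cv u l -> Un_cv v l.
Proof. intros H Hc eps He. destruct (Hc eps He) as [N HN]. exists N; intros. rewrite <- H; auto. Qed.

Lemma Un_cv_const c : Un_cv (fun _ => c) c.
Proof. intros eps He. exists O; intros. unfold Rdist. rewrite Rminus_diag, Rabs_R0; lra. Qed.

Lemma sumR_cv K (g : nat -> nat -> R) (l : nat -> R) :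
  (forall j, (j < K)%nat -> Un_cv (fun n => g n j) (l j)) ->
  Un_cv (fun n => sumR K (g n)) (sumR K l).
Proof. induction K; simpl; intros H. apply Un_cv_const.
  apply CV_plus. apply IHK; intros; apply H; lia. apply H; lia. Qed.

Lemma strict_mono (phi : nat -> nat) : (forall n, (phi n < phi (S n))%nat) ->
  forall a b, (a < b)%nat -> (phi a < phi b)%nat.
Proof. intros H a b Hab. induction Hab. apply H. specialize (H m). lia. Qed.

Lemma strict_ge (phi : nat -> nat) : (forall n, (phi n < phi (S n))%nat) -> forall n, (n <= phi n)%nat.
Proof. intros H n; induction n. lia. specialize (H n); lia. Qed.

Lemma subseq_cv (phi : nat -> nat) u l : (forall n, (phi n < phi (S n))%nat) ->
  Un_cv u l -> Un_cv (fun n => u (phi n)) l.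
Proof. intros H Hc eps He. destruct (Hc eps He) as [N HN]. exists N; intros n Hn.
  apply HN. pose proof (strict_ge phi H n). lia. Qed.

Lemma finite_eventually m (P : nat -> nat -> Prop) :
  (forall j, (j < m)%nat -> exists N, forall n, (N <= n)%nat -> P j n) ->
  exists N, forall n, (N <= n)%nat -> forall j, (j < m)%nat -> P j n.
Proof. induction m; intros H. exists O; intros; lia.
  destruct IHm as [N1 H1]. intros; apply H; lia.
  destruct (H m ltac:(lia)) as [N2 H2]. exists (max N1 N2). intros n Hn j Hj.
  destruct (Nat.eq_dec j m) as [->|]. apply H2; lia. apply H1; lia. Qed.

Lemma cluster (g : nat -> R) (phi : nat -> nat) L gy :
  (forall n, (phi n < phi (S n))%nat) -> Un_cv (fun n => g (phi n)) L -> gy <= L ->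
  forall eps, 0 < eps -> forall N0, exists n, (N0 <= n)%nat /\ gy < g n + eps.
Proof. intros Hphi Hc Hy eps He N0. destruct (Hc eps He) as [N HN].
  exists (phi (max N N0)). split. pose proof (strict_ge phi Hphi (max N N0)); lia.
  specialize (HN (max N N0) ltac:(lia)). unfold Rdist in HN. destruct (Rabs_def2 _ _ HN). lra. Qed.

Lemma gen_min {X : Type} (P : X -> Prop) (g : X -> R) (b : R) :
  (exists x, P x) -> (forall x, P x -> b <= g x) ->
  (forall (xs : nat -> X) c, (forall n, P (xs n)) -> (forall n, g (xs n) <= c) ->
     exists y, P y /\ forall eps, 0 < eps -> forall N0, exists n, (N0 <= n)%nat /\ g y < g (xs n) + eps) ->
  exists y, P y /\ forall x, P x -> g y <= g x.
Proof.
  intros [x0 Hx0] Hb Hext.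
  destruct (completeness (fun r => exists x, P x /\ r = - g x)) as [m [Hub Hlub]].
  { exists (-b). intros r [x [Px ->]]. unfold Rle; specialize (Hb x Px); lra. }
  { exists (- g x0); eauto. }
  assert (Hglb : forall x, P x -> -m <= g x).
  { intros x Px. assert (- g x <= m) by (apply Hub; eauto). lra. }
  assert (Happ : forall eps, 0 < eps -> exists x, P x /\ g x < -m + eps).
  { intros eps He. apply NNPP; intro Hn.
    assert (m <= m - eps); [|lra]. apply Hlub. intros r [x [Px ->]].
    destruct (Rle_dec (- g x) (m - eps)); auto. exfalso; apply Hn; exists x; split; auto; lra. }
  assert (Hseq : forall n : nat, exists x, P x /\ g x < -m + / (INR n + 1)).
  { intros n. apply Happ. apply Rinv_0_lt_compat. pose proof (pos_INR n); lra. }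
  set (xs := fun n => proj1_sig (constructive_indefinite_description _ (Hseq n))).
  assert (Hxs : forall n, P (xs n) /\ g (xs n) < -m + / (INR n + 1)).
  { intros n; unfold xs; destruct (constructive_indefinite_description _ _); auto. }
  destruct (Hext xs (-m + 1)) as [y [Py Hy]].
  { intros n; apply Hxs. }
  { intros n. destruct (Hxs n) as [_ H]. assert (/ (INR n + 1) <= 1); [|lra].
    rewrite <- Rinv_1. apply Rinv_le_contravar; [lra|]. pose proof (pos_INR n); lra. }
  exists y; split; auto. intros x Px. pose proof (Hglb x Px).
  enough (g y <= -m) by lra. apply Rnot_lt_le; intro Hlt.
  set (eps := (g y + m) / 2).
  destruct (archimed_cor1 eps) as [N0 [HN0 HN0p]]. unfold eps; lra.
  destruct (Hy eps ltac:(unfold eps; lra) N0) as [n [Hn Hgy]].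
  destruct (Hxs n) as [_ Hxn].
  assert (/ (INR n + 1) < / INR N0).
  { apply Rinv_lt_contravar. apply Rmult_lt_0_compat. apply lt_0_INR; lia. pose proof (pos_INR n); lra.
    apply le_INR in Hn. lra. }
  unfold eps in *; lra.
Qed.


Section Metric.
Context {M : Type} (dist : M -> M -> R) (HM : complete_connected_riemannian_distance dist).

Lemma d_nonneg x y : 0 <= dist x y. Proof. apply HM. Qed.
Lemma d_sym x y : dist x y = dist y x. Proof. apply HM. Qed.
Lemma d_tri x y z : dist x z <= dist x y + dist y z. Proof. apply HM. Qed.
Lemma d_refl x : dist x x = 0. Proof. apply HM; auto. Qed.

Lemma d_compact (x : nat -> M) o c : (forall n, dist (x n) o <= c) ->
  exists (phi : nat -> nat) (y : M), (forall n, (phi n < phi (S n))%nat) /\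
    Un_cv (fun n => dist (x (phi n)) y) 0.
Proof. apply HM. Qed.

Lemma dist_cv (a b : nat -> M) a0 b0 :
  Un_cv (fun n => dist (a n) a0) 0 -> Un_cv (fun n => dist (b n) b0) 0 ->
  Un_cv (fun n => dist (a n) (b n)) (dist a0 b0).
Proof.
  intros Ha Hb eps He. destruct (Ha (eps/2)) as [N1 H1]; [lra|]. destruct (Hb (eps/2)) as [N2 H2]; [lra|].
  exists (max N1 N2); intros n Hn. specialize (H1 n ltac:(lia)). specialize (H2 n ltac:(lia)).
  unfold Rdist in *. rewrite Rminus_0_r, Rabs_pos_eq in H1, H2 by apply d_nonneg.
  pose proof (d_tri (a n) a0 (b n)). pose proof (d_tri a0 b0 (b n)).
  pose proof (d_tri a0 (a n) b0). pose proof (d_tri (a n) (b n) b0).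
  rewrite (d_sym a0 (a n)) in *. rewrite (d_sym b0 (b n)) in *.
  apply Rabs_def1; lra.
Qed.

Lemma cv_const_d (y : M) : Un_cv (fun _ : nat => dist y y) 0.
Proof. eapply Un_cv_ext; [|apply Un_cv_const]. intros; simpl; rewrite d_refl; auto. Qed.

Lemma multi_extract (o : M) (c : R) : forall m (x : nat -> nat -> M),
  (forall j n, (j < m)%nat -> dist (x n j) o <= c) ->
  exists (phi : nat -> nat) (y : nat -> M), (forall n, (phi n < phi (S n))%nat) /\
    forall j, (j < m)%nat -> Un_cv (fun n => dist (x (phi n) j) (y j)) 0.
Proof.
  induction m; intros x Hx.
  - exists (fun n => n), (fun _ => o). split; [lia|]. intros; lia.
  - destruct (IHm x) as [phi [y [Hphi Hy]]]. intros; apply Hx; lia.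
    destruct (d_compact (fun n => x (phi n) m) o c) as [psi [z [Hpsi Hz]]]. intros; apply Hx; lia.
    exists (fun n => phi (psi n)), (fun j => if Nat.eq_dec j m then z else y j). split.
    + intros n. apply strict_mono; auto.
    + intros j Hj. destruct (Nat.eq_dec j m) as [->|]. exact Hz.
      apply (subseq_cv psi (fun n => dist (x (phi n) j) (y j))); auto. apply Hy; lia.
Qed.

Variable (K : nat) (A : nat -> nat -> R).

Definition Fm (i : nat) (u : nat -> M) (w : M) := sumR K (fun j => A i j * (dist w (u j))^2).

Lemma term_lower a d d0 D : 0 <= d -> 0 <= d0 -> 0 <= D -> d <= d0 + D -> d0 <= d + D ->
  a * d0^2 - Rabs a * (2*D*d0 + D^2) <= a * d^2.
Proof.
  intros. destruct (Rle_dec 0 a).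
  - rewrite Rabs_pos_eq by lra.
    assert (d0^2 - 2*D*d0 - D^2 <= d^2).
    { destruct (Rle_dec D d0). nra. nra. }
    nra.
  - rewrite Rabs_left by lra. assert (d^2 <= d0^2 + 2*D*d0 + D^2) by nra. nra.
Qed.

Definition Sabs i := sumR K (fun j => Rabs (A i j)).

Lemma Sabs_nonneg i : 0 <= Sabs i.
Proof. apply sumR_nonneg; intros; apply Rabs_pos. Qed.

Lemma sumR_lin n (a b : nat -> R) c1 c2 :
  sumR n (fun j => a j * c1 - b j * c2) = sumR n a * c1 - sumR n b * c2.
Proof. induction n; simpl; [ring|]. rewrite IHn; ring. Qed.

Lemma F_lower i u w D : 0 <= D -> (forall j, (j < K)%nat -> dist (u 0%nat) (u j) <= D) ->
  sumR K (A i) * (dist w (u 0%nat))^2 - Sabs i * (2 * D * dist w (u 0%nat) + D^2) <= Fm i u w.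
Proof.
  intros HD Hu. unfold Fm, Sabs. rewrite <- sumR_lin.
  apply sumR_le. intros j Hj.
  apply term_lower; auto using d_nonneg.
  - pose proof (d_tri w (u 0%nat) (u j)). specialize (Hu j Hj). lra.
  - pose proof (d_tri w (u j) (u 0%nat)). specialize (Hu j Hj). rewrite d_sym in Hu. lra.
Qed.

Lemma F_upper0 i u D : 0 <= D -> (forall j, (j < K)%nat -> dist (u 0%nat) (u j) <= D) ->
  Fm i u (u 0%nat) <= Sabs i * D^2.
Proof.
  intros HD Hu. unfold Fm, Sabs. rewrite Rmult_comm, <- sumR_scal. apply sumR_le.
  intros j Hj. specialize (Hu j Hj). pose proof (d_nonneg (u 0%nat) (u j)).
  assert (dist (u 0%nat) (u j) ^2 <= D^2) by nra.
  rewrite (Rmult_comm (D^2)). destruct (Rle_dec 0 (A i j)).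
  - rewrite Rabs_pos_eq by lra. nra.
  - rewrite Rabs_left by lra. nra.
Qed.

Lemma quad_bound d b c : 0 <= d -> 0 <= b -> 0 <= c -> d^2 <= b * d + c -> d <= 1 + b + c.
Proof. intros. destruct (Rle_dec d 1). lra. nra. Qed.

Lemma F_sublevel i u w D c : 0 <= D -> (forall j, (j < K)%nat -> dist (u 0%nat) (u j) <= D) ->
  sumR K (A i) = 1 -> Fm i u w <= c ->
  dist w (u 0%nat) <= 1 + 2 * Sabs i * D + (Sabs i * D^2 + Rabs c).
Proof.
  intros HD Hu HA Hc. pose proof (F_lower i u w D HD Hu). rewrite HA in H.
  pose proof (Sabs_nonneg i). pose proof (Rle_abs c).
  pose proof (Rabs_pos c). apply quad_bound; auto using d_nonneg; nra.
Qed.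

Lemma F_cv i (u : nat -> nat -> M) (w : nat -> M) u0 w0 :
  (forall j, (j < K)%nat -> Un_cv (fun n => dist (u n j) (u0 j)) 0) ->
  Un_cv (fun n => dist (w n) w0) 0 ->
  Un_cv (fun n => Fm i (u n) (w n)) (Fm i u0 w0).
Proof.
  intros Hu Hw. unfold Fm. apply (sumR_cv K (fun n j => A i j * dist (w n) (u n j) ^ 2)).
  intros j Hj. assert (Hd := dist_cv _ _ _ _ Hw (Hu j Hj)).
  pose proof (CV_mult _ _ _ _ Hd Hd) as H2.
  apply CV_mult; [apply Un_cv_const|].
  replace (dist w0 (u0 j) ^ 2) with (dist w0 (u0 j) * dist w0 (u0 j)) by ring.
  eapply Un_cv_ext; [|exact H2]. intros; simpl; ring.
Qed.

End Metric.


Section Means.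
Context {M : Type} (dist : M -> M -> R) (HM : complete_connected_riemannian_distance dist).
Variable (K : nat) (A : nat -> nat -> R) (HK : (0 < K)%nat).

Lemma diam_ge u j : (j < K)%nat -> dist (u 0%nat) (u j) <= diam dist K u.
Proof. intros Hj. unfold diam.
  eapply Rle_trans; [|apply (maxR_ge K _ 0%nat HK)]. simpl.
  apply (maxR_ge K (fun k => dist (u 0%nat) (u k))); auto. Qed.

Lemma diam_nonneg u : 0 <= diam dist K u.
Proof. eapply Rle_trans; [apply (d_nonneg dist HM (u 0%nat) (u 0%nat))|]. apply diam_ge; auto. Qed.

Lemma mean_exists u i : sumR K (A i) = 1 -> exists v, is_mean dist K A i u v.
Proof.
  intros HA. set (D := diam dist K u).
  assert (HD : 0 <= D) by apply diam_nonneg.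
  assert (Hu : forall j, (j < K)%nat -> dist (u 0%nat) (u j) <= D) by (intros; apply diam_ge; auto).
  destruct (gen_min (fun _ : M => True) (Fm dist K A i u) (-(Sabs K A i * D)^2 - Sabs K A i * D^2))
    as [y [_ Hy]].
  - exists (u 0%nat); auto.
  - intros x _. pose proof (F_lower dist HM K A i u x D HD Hu). rewrite HA in H.
    pose proof (Sabs_nonneg K A i). pose proof (d_nonneg dist HM x (u 0%nat)).
    pose proof (pow2_ge_0 (dist x (u 0%nat) - Sabs K A i * D)). nra.
  - intros xs c _ Hc.
    destruct (d_compact dist HM xs (u 0%nat) _ (fun n => F_sublevel dist HM K A i u (xs n) D c HD Hu HA (Hc n)))
      as [phi [y [Hphi Hy]]].
    exists y; split; auto.
    apply (cluster (fun n => Fm dist K A i u (xs n)) phi (Fm dist K A i u y)); auto; [|lra].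
    apply (F_cv dist HM K A i (fun _ => u) (fun n => xs (phi n))); auto.
    intros; apply cv_const_d; auto.
  - exists y. intros w. apply Hy; auto.
Qed.

Lemma calA_exists u f i : sumR K (A i) = 1 -> exists v, in_calA dist K A f u i v.
Proof.
  intros HA.
  destruct (gen_min (is_mean dist K A i u) (fun v => dist v (f i)) 0) as [y [Py Hy]].
  - apply mean_exists; auto.
  - intros; apply d_nonneg; auto.
  - intros xs c Pxs Hc.
    destruct (d_compact dist HM xs (f i) c Hc) as [phi [y [Hphi Hy]]].
    exists y; split.
    + intros w. apply (Rle_cv_lim (Un := fun n => Fm dist K A i u (xs (phi n))) (Vn := fun _ => Fm dist K A i u w)).
      * intros n; apply Pxs.
      * apply (F_cv dist HM K A i (fun _ => u) (fun n => xs (phi n))); auto.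
        intros; apply cv_const_d; auto.
      * apply Un_cv_const.
    + apply (cluster (fun n => dist (xs n) (f i)) phi (dist y (f i))); auto; [|lra].
      apply (dist_cv dist HM); auto. apply cv_const_d; auto.
  - exists y; split; auto.
Qed.

Lemma calA_vec u f N : (forall i, (i < N)%nat -> sumR K (A i) = 1) ->
  exists v : nat -> M, forall i, (i < N)%nat -> in_calA dist K A f u i (v i).
Proof.
  intros HA.
  assert (H : forall i, exists v, (i < N)%nat -> in_calA dist K A f u i v).
  { intros i. destruct (Nat.lt_ge_cases i N).
    - destruct (calA_exists u f i (HA i H)) as [v Hv]. exists v; auto.
    - exists (u 0%nat). intros; lia. }
  exists (fun i => proj1_sig (constructive_indefinite_description _ (H i))).
  intros i Hi. destruct (constructive_indefinite_description _ _); simpl; auto.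
Qed.

End Means.


Lemma nat_above r : exists n : nat, r < INR n.
Proof.
  destruct (Rle_dec r 0). exists 1%nat; simpl; lra.
  destruct (archimed_cor1 (/ r)) as [N [HN HNp]]. apply Rinv_0_lt_compat; lra.
  exists N. apply Rnot_le_lt; intro Hle. assert (/ r <= / INR N).
  { apply Rinv_le_contravar; auto. apply lt_0_INR; auto. } lra.
Qed.

Section Main.
Context (M : Type) (dist : M -> M -> R)
  (HM : complete_connected_riemannian_distance dist)
  (N K : nat) (HN : (0 < N)%nat)
  (A : nat -> nat -> R)
  (HA : forall i, (i < N)%nat -> sumR K (fun j => A i j) = 1)
  (f : nat -> M) (p lam : R) (Hp : 1 <= p) (Hlam : 0 < lam)
  (Reg : (nat -> M) -> R) (HReg0 : forall u, 0 <= Reg u)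
  (HRlsc : lsc_on_MK dist K Reg)
  (HRcoer : coercive_in_diam dist K Reg).

Lemma HK : (0 < K)%nat.
Proof. destruct K; [|lia]. specialize (HA 0%nat HN). simpl in HA. lra. Qed.

Lemma HA' : forall i, (i < N)%nat -> sumR K (A i) = 1.
Proof. intros i Hi. rewrite <- (HA i Hi). apply sumR_ext; auto. Qed.

Lemma diam_bound (U : nat -> nat -> M) c : (forall n, lam * Reg (U n) <= c) ->
  exists Dd, forall n, diam dist K (U n) <= Dd.
Proof.
  intros Hc. apply NNPP; intro Hn.
  assert (Hk : forall k : nat, exists n, INR k < diam dist K (U n)).
  { intros k. apply NNPP; intro Hk. apply Hn. exists (INR k). intros n.
    apply Rnot_lt_le; intro; apply Hk; eauto. }
  set (nk := fun k => proj1_sig (constructive_indefinite_description _ (Hk k))).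
  assert (Hnk : forall k, INR k < diam dist K (U (nk k))).
  { intros k; unfold nk; destruct (constructive_indefinite_description _ _); auto. }
  assert (Hcv : cv_infty (fun k => diam dist K (U (nk k)))).
  { intros Mx. destruct (nat_above Mx) as [N0 HN0]. exists N0. intros n Hn0.
    specialize (Hnk n). apply le_INR in Hn0. lra. }
  destruct (HRcoer _ Hcv (c / lam)) as [N0 HN0].
  specialize (HN0 N0 (Nat.le_refl _)). specialize (Hc (nk N0)).
  apply (Rmult_lt_compat_l lam) in HN0; auto.
  replace (lam * (c / lam)) with c in HN0 by (field; lra). simpl in HN0. lra.
Qed.

Definition data (v : nat -> M) := sumR N (fun i => rpow (dist (v i) (f i)) p).

Lemma data_nonneg v : 0 <= data v.
Proof. apply sumR_nonneg; intros; apply rpow_nonneg. Qed.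

Lemma extraction (xs : nat -> (nat -> M) * R) c :
  (forall n, objective_value dist N K A f p lam Reg (fst (xs n)) (snd (xs n))) ->
  (forall n, snd (xs n) <= c) ->
  exists y, objective_value dist N K A f p lam Reg (fst y) (snd y) /\
    forall eps, 0 < eps -> forall N0, exists n, (N0 <= n)%nat /\ snd y < snd (xs n) + eps.
Proof.
  intros Hxs Hc. set (U := fun n => fst (xs n)). set (E := fun n => snd (xs n)).
  set (V := fun n => proj1_sig (constructive_indefinite_description _ (Hxs n))).
  assert (HV : forall n, (forall i, (i < N)%nat -> in_calA dist K A f (U n) i (V n i)) /\
                         E n = data (V n) + lam * Reg (U n)).
  { intros n. unfold V. destruct (constructive_indefinite_description _ _); simpl; auto. }
  assert (HRegb : forall n, lam * Reg (U n) <= c).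
  { intros n. destruct (HV n) as [_ He]. pose proof (data_nonneg (V n)). specialize (Hc n).
    change (E n <= c) in Hc. lra. }
  assert (HB : forall n i, (i < N)%nat -> dist (V n i) (f i) <= Rmax 1 c).
  { intros n i Hi. apply rpow_bound with p; auto. apply (d_nonneg dist HM).
    destruct (HV n) as [_ He]. specialize (Hc n). change (E n <= c) in Hc.
    pose proof (Rmult_le_pos _ _ (Rlt_le _ _ Hlam) (HReg0 (U n))).
    pose proof (sumR_term_le N (fun i => rpow (dist (V n i) (f i)) p) i (fun k _ => rpow_nonneg _ _) Hi).
    unfold data in He. simpl in H0. lra. }
  destruct (diam_bound U c HRegb) as [Dd HDd].
  assert (HDd0 : 0 <= Dd) by (eapply Rle_trans; [apply (diam_nonneg dist HM K HK (U 0%nat))| apply HDd]).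
  assert (Hu : forall n j, (j < K)%nat -> dist (U n 0%nat) (U n j) <= Dd).
  { intros. eapply Rle_trans; [apply (diam_ge dist K HK)|]; auto. }
  set (Stot := sumR N (Sabs K A)).
  assert (HS : forall i, (i < N)%nat -> Sabs K A i <= Stot).
  { intros. apply sumR_term_le; auto. intros; apply Sabs_nonneg. }
  set (C1 := 1 + 2 * Stot * Dd + 2 * Stot * Dd^2).
  assert (HC1 : forall n i, (i < N)%nat -> dist (V n i) (U n 0%nat) <= C1).
  { intros n i Hi. destruct (HV n) as [HV1 _]. destruct (HV1 i Hi) as [Hm _].
    assert (Fm dist K A i (U n) (V n i) <= Sabs K A i * Dd^2).
    { eapply Rle_trans; [apply Hm|]. apply (F_upper0 dist HM); auto. }
    pose proof (F_sublevel dist HM K A i (U n) (V n i) Dd _ HDd0 (Hu n) (HA' i Hi) H).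
    pose proof (Sabs_nonneg K A i). pose proof (HS i Hi).
    rewrite Rabs_pos_eq in H0 by nra. unfold C1.
    assert (Sabs K A i * Dd <= Stot * Dd) by nra.
    assert (Sabs K A i * Dd^2 <= Stot * Dd^2) by nra. lra. }
  set (x := fun n j => if (j <? K)%nat then U n j else V n (j - K)%nat).
  set (c' := Dd + 2 * C1 + Rmax 1 c).
  assert (Hx : forall j n, (j < K + N)%nat -> dist (x n j) (f 0%nat) <= c').
  { intros j n Hj. unfold x, c'.
    pose proof (HC1 n 0%nat HN) as T1. pose proof (HB n 0%nat HN) as T2.
    pose proof (d_nonneg dist HM (V n 0%nat) (U n 0%nat)) as T3.
    pose proof (d_tri dist HM (U n 0%nat) (V n 0%nat) (f 0%nat)) as T4.
    rewrite (d_sym dist HM (U n 0%nat) (V n 0%nat)) in T4.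
    destruct (Nat.ltb_spec j K) as [Hj'|Hj'].
    - pose proof (Hu n j Hj') as T5. rewrite (d_sym dist HM) in T5.
      pose proof (d_tri dist HM (U n j) (U n 0%nat) (f 0%nat)). lra.
    - pose proof (HC1 n (j - K)%nat ltac:(lia)).
      pose proof (d_tri dist HM (V n (j - K)%nat) (U n 0%nat) (f 0%nat)). lra. }
  destruct (multi_extract dist HM (f 0%nat) c' (K + N) x Hx) as [phi [y [Hphi Hy]]].
  assert (Hcu : forall j, (j < K)%nat -> Un_cv (fun n => dist (U (phi n) j) (y j)) 0).
  { intros j Hj. eapply Un_cv_ext; [|apply (Hy j ltac:(lia))]. intros n; simpl.
    unfold x. destruct (Nat.ltb_spec j K); [auto|lia]. }
  assert (Hcv : forall i, (i < N)%nat -> Un_cv (fun n => dist (V (phi n) i) (y (K + i)%nat)) 0).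
  { intros i Hi. eapply Un_cv_ext; [|apply (Hy (K + i)%nat ltac:(lia))]. intros n; simpl.
    unfold x. destruct (Nat.ltb_spec (K + i) K); [lia|]. replace (K + i - K)%nat with i by lia; auto. }
  assert (Hmean : forall i, (i < N)%nat -> is_mean dist K A i y (y (K + i)%nat)).
  { intros i Hi w.
    apply (Rle_cv_lim (Un := fun n => Fm dist K A i (U (phi n)) (V (phi n) i))
                      (Vn := fun n => Fm dist K A i (U (phi n)) w)).
    - intros n. destruct (HV (phi n)) as [HV1 _]. apply (HV1 i Hi).
    - apply (F_cv dist HM K A i (fun n => U (phi n)) (fun n => V (phi n) i)); auto.
    - apply (F_cv dist HM K A i (fun n => U (phi n)) (fun n => w)); auto.
      apply cv_const_d; auto. }
  destruct (calA_vec dist HM K A HK y f N HA') as [z Hz].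
  exists (y, data z + lam * Reg y). split.
  { simpl. exists z; split; auto. }
  simpl. intros eps He N0.
  assert (Hzle : data z <= data (fun i => y (K + i)%nat)).
  { apply sumR_le. intros i Hi. apply rpow_mono. lra. split. apply (d_nonneg dist HM).
    apply (Hz i Hi). apply Hmean; auto. }
  assert (Dcv : Un_cv (fun n => data (V (phi n))) (data (fun i => y (K + i)%nat))).
  { unfold data. apply (sumR_cv N (fun n i => rpow (dist (V (phi n) i) (f i)) p)).
    intros i Hi. apply rpow_cont; auto. intros; apply (d_nonneg dist HM). apply (d_nonneg dist HM).
    apply (dist_cv dist HM); auto. apply cv_const_d; auto. }
  destruct (HRlsc y (eps / (2 * lam))) as [delta [Hdel Hlsc]].
  { apply Rdiv_lt_0_compat; lra. }
  destruct (finite_eventually K (fun j n => dist (U (phi n) j) (y j) < delta)) as [N2 HN2].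
  { intros j Hj. destruct (Hcu j Hj delta Hdel) as [N2 HN2]. exists N2. intros n Hn.
    specialize (HN2 n Hn). unfold Rdist in HN2. rewrite Rminus_0_r, Rabs_pos_eq in HN2 by apply (d_nonneg dist HM). auto. }
  destruct (Dcv (eps / 2)) as [N1 HN1]. lra.
  set (k := max (max N1 N2) N0).
  exists (phi k). split. { pose proof (strict_ge phi Hphi k). unfold k in *; lia. }
  destruct (HV (phi k)) as [_ HEk]. change (snd (xs (phi k))) with (E (phi k)). rewrite HEk.
  specialize (HN1 k ltac:(unfold k; lia)). unfold Rdist in HN1. destruct (Rabs_def2 _ _ HN1).
  specialize (Hlsc (U (phi k)) (HN2 k ltac:(unfold k; lia))).
  apply (Rmult_lt_compat_l lam) in Hlsc; auto.
  assert (lam * (Reg y - eps / (2 * lam)) = lam * Reg y - eps / 2) by (field; lra).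
  lra.
Qed.

End Main.

Theorem theorem3p1 (M : Type) (dist : M -> M -> R)
  (HM : complete_connected_riemannian_distance dist)
  (N K : nat) (HN : (0 < N)%nat)
  (A : nat -> nat -> R)
  (HA : forall i, (i < N)%nat -> sumR K (fun j => A i j) = 1)
  (f : nat -> M) (p lam : R) (Hp : 1 <= p) (Hlam : 0 < lam)
  (Reg : (nat -> M) -> R) (HReg0 : forall u, 0 <= Reg u)
  (HRlsc : lsc_on_MK dist K Reg)
  (HRcoer : coercive_in_diam dist K Reg) :
  exists (ustar : nat -> M) (Estar : R),
    objective_value dist N K A f p lam Reg ustar Estar /\
    forall (u : nat -> M) (E : R),
      objective_value dist N K A f p lam Reg u E -> Estar <= E.
Proof.
  assert (HK0 : (0 < K)%nat).
  { destruct K; [|lia]. specialize (HA 0%nat HN). simpl in HA. lra. }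
  assert (HA1 : forall i, (i < N)%nat -> sumR K (A i) = 1).
  { intros i Hi. rewrite <- (HA i Hi). apply sumR_ext; auto. }
  destruct (gen_min (fun xe : (nat -> M) * R => objective_value dist N K A f p lam Reg (fst xe) (snd xe))
              snd 0) as [[us Es] [Pus Hus]].
  - destruct (calA_vec dist HM K A HK0 (fun _ => f 0%nat) f N HA1) as [v Hv].
    exists ((fun _ => f 0%nat), data M dist N f p v + lam * Reg (fun _ => f 0%nat)).
    simpl. exists v; split; auto.
  - intros [u E] [v [_ HE]]. simpl in *. rewrite HE.
    pose proof (data_nonneg M dist N f p v). unfold data in H.
    pose proof (Rmult_le_pos _ _ (Rlt_le _ _ Hlam) (HReg0 u)). lra.
  - intros xs c Hxs Hc. apply (extraction M dist HM N K HN A HA f p lam Hp Hlam Reg HReg0 HRlsc HRcoer xs c Hxs Hc).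
  - exists us, Es. split; auto. intros u E H. apply (Hus (u, E) H).
Qed.
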